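(* Let $\mathcal T$ be an MPS with $n$ sites and nonzero contraction, and let $\mathcal C$ be an MPS with the same contraction which is in (left-)canonical form centered at site $n$, with all bond dimensions of $\mathcal C$ at most $D$. Then, up to $O(\epsilon^2)$ as $\epsilon\to0$, $$\sup_{\beta}\mathscr E_r(\mathcal C,\beta)\le\frac{1+(n-1)\sqrt D}{n}\,\sup_{\alpha}\mathscr E_r(\mathcal T,\alpha),$$ where the suprema run over $\epsilon$-perturbations $\beta$ of $\mathcal C$ and $\alpha$ of $\mathcal T$. Moreover, when all bond dimensions equal $D$, the factor $\frac{1+(n-1)\sqrt D}{n}$ cannot be improved (as a function of $n$ and $D$).
   Context: MPS: an MPS with $n$ sites is a tensor network on a path: site $j$ carries a physical (uncontracted) leg $p_j$, and for $1\le j\le n-1$ a bond (contracted leg) $b_j$ of dimension $D_j$ joins sites $j$ and $j+1$; site tensors have legs $(p_1,b_1)$, $(b_{j-1},p_j,b_j)$ for $1<j<n$, and $(b_{n-1},p_n)$. The contraction sums over all bond indices the product of the site entries. An MPS $(\mathbf C^{(1)},\dots,\mathbf C^{(n)})$ is in (left-)canonical form centered at site $n$ if for every $j\le n-1$ the matricization of $\mathbf C^{(j)}$ with rows indexed by $(b_{j-1},p_j)$ (just $p_1$ for $j=1$) and columns by $b_j$ is an isometry. An $\epsilon$-perturbation of an MPS with sites $\mathbf T^{(i)}$ is a tuple $(\delta^{(i)})$, $\delta^{(i)}$ of the shape of $\mathbf T^{(i)}$, with $\|\delta^{(i)}\|_F\le\epsilon\|\mathbf T^{(i)}\|_F$;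 $\mathscr E_r$ denotes $\|\hat{\mathbf T}-\mathbf T\|_F/\|\mathbf T\|_F$ where $\hat{\mathbf T}$ is the contraction of the perturbed sites. $\|\cdot\|_F$ Frobenius norm. *)

(* Defs.v *)
From Stdlib Require Import Reals Lra Lia Arith.
Open Scope R_scope.

Fixpoint fsum (m : nat) (f : nat -> R) : R :=
  match m with
  | O => 0
  | S k => fsum k f + f k
  end.

Definition upd (p : nat -> nat) (k x : nat) : nat -> nat :=
  fun j => if Nat.eqb j k then x else p j.

(* msum n d F = sum of F p over all multi-indices p with p j < d j for j < n
   (and p j = 0 for j >= n). *)
Fixpoint msum (n : nat) (d : nat -> nat) (F : (nat -> nat) -> R) : R :=
  match n with
  | O => F (fun _ => O)
  | S k => msum k d (fun p => fsum (d k) (fun x => F (upd p k x)))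
  end.

(* An MPS with n sites, numbered 0 .. n-1.
   Physical dimensions: d : nat -> nat (site j has physical dimension d j).
   Bond dimensions: Db : nat -> nat, where bond j (1 <= j <= n-1) joins
   sites j-1 and j (0-based) and has dimension Db j; the boundary
   "bonds" 0 and n are dummy legs of dimension 1 (see bonds_ok), so that
   site 0 effectively has legs (p, b_1) and site n-1 legs (b_{n-1}, p).
   Site tensor of site j : A j a x b, with a < Db j (left bond),
   x < d j (physical), b < Db (S j) (right bond). *)
Definition site := nat -> nat -> nat -> R.
Definition mps := nat -> site.

Definition bonds_ok (n : nat) (Db : nat -> nat) : Prop :=
  Db O = 1%nat /\ Db n = 1%nat.

Fixpoint contr_vec (Db : nat -> nat) (A : mps) (p : nat -> nat) (k : nat)
  : nat -> R :=
  match k with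
  | O => fun b => if Nat.eqb b 0 then 1 else 0
  | S k' => fun b => fsum (Db k') (fun a => contr_vec Db A p k' a * A k' a (p k') b)
  end.

Definition contract (n : nat) (Db : nat -> nat) (A : mps) (p : nat -> nat) : R :=
  contr_vec Db A p n O.

Definition site_norm (dl dp dr : nat) (S : site) : R :=
  sqrt (fsum dl (fun a => fsum dp (fun x => fsum dr (fun b => (S a x b) ^ 2)))).

Definition site_norm_at (d Db : nat -> nat) (A : mps) (j : nat) : R :=
  site_norm (Db j) (d j) (Db (S j)) (A j).

Definition contr_norm (n : nat) (d Db : nat -> nat) (A : mps) : R :=
  sqrt (msum n d (fun p => (contract n Db A p) ^ 2)).

Definition contr_dist (n : nat) (d Db1 : nat -> nat) (A1 : mps)
  (Db2 : nat -> nat) (A2 : mps) : R :=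
  sqrt (msum n d (fun p => (contract n Db1 A1 p - contract n Db2 A2 p) ^ 2)).

Definition nonzero_contraction (n : nat) (d Db : nat -> nat) (A : mps) : Prop :=
  exists p, (forall j, (j < n)%nat -> (p j < d j)%nat) /\ contract n Db A p <> 0.

Definition same_contraction (n : nat) (d Db1 : nat -> nat) (A1 : mps)
  (Db2 : nat -> nat) (A2 : mps) : Prop :=
  forall p, (forall j, (j < n)%nat -> (p j < d j)%nat) ->
    contract n Db1 A1 p = contract n Db2 A2 p.

(* Left-canonical form centered at the last site: for every site j except
   the last one, the matricization with rows (left bond, physical) and
   columns (right bond) is an isometry, i.e. M^T M = I. *)
Definition left_canonical (n : nat) (d Db : nat -> nat) (C : mps) : Prop :=
  forall j, (S j < n)%nat ->
    forall b b', (b < Db (S j))%nat -> (b' < Db (S j))%nat ->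
      fsum (Db j) (fun a => fsum (d j) (fun x => C j a x b * C j a x b'))
      = if Nat.eqb b b' then 1 else 0.

Definition is_perturbation (n : nat) (d Db : nat -> nat) (A : mps) (eps : R)
  (delta : mps) : Prop :=
  forall j, (j < n)%nat ->
    site_norm_at d Db delta j <= eps * site_norm_at d Db A j.

Definition perturb (A delta : mps) : mps :=
  fun j a x b => A j a x b + delta j a x b.

Definition rel_err (n : nat) (d Db : nat -> nat) (A delta : mps) : R :=
  contr_dist n d Db (perturb A delta) Db A / contr_norm n d Db A.

Definition err_set (n : nat) (d Db : nat -> nat) (A : mps) (eps : R) : R -> Prop :=
  fun r => exists delta, is_perturbation n d Db A eps delta /\
                         r = rel_err n d Db A delta.

Definition factor (n D : nat) : R :=
  (1 + INR (n - 1) * sqrt (INR D)) / INR n.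

Definition sup_bound_up_to_O_eps2 (n : nat) (d DC : nat -> nat) (C : mps)
  (DT : nat -> nat) (T : mps) (c : R) : Prop :=
  exists K eps0, 0 < eps0 /\
    forall eps, 0 < eps < eps0 ->
      forall sC sT, is_lub (err_set n d DC C eps) sC ->
                    is_lub (err_set n d DT T eps) sT ->
                    sC <= c * sT + K * eps ^ 2.

(* Main.v *)
Require Import Defs.
From Stdlib Require Import Reals.
From Stdlib Require Import Lra Lia Arith FunctionalExtensionality.
Open Scope R_scope.


Lemma fsum_ext N f g : (forall i, (i < N)%nat -> f i = g i) -> fsum N f = fsum N g.
Proof. induction N; simpl; intros H; auto. rewrite IHN by (intros; apply H; lia). rewrite H by lia. auto. Qed.

Lemma fsum_plus N f g : fsum N (fun i => f i + g i) = fsum N f + fsum N g.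
Proof. induction N; simpl; [lra| rewrite IHN; lra]. Qed.

Lemma fsum_scal N c f : fsum N (fun i => c * f i) = c * fsum N f.
Proof. induction N; simpl; [lra| rewrite IHN; lra]. Qed.

Lemma fsum_mulr N c f : fsum N (fun i => f i * c) = fsum N f * c.
Proof. induction N; simpl; [lra| rewrite IHN; lra]. Qed.

Lemma fsum_sub N f g : fsum N (fun i => f i - g i) = fsum N f - fsum N g.
Proof. induction N; simpl; [lra| rewrite IHN; lra]. Qed.

Lemma fsum_zero N : fsum N (fun _ => 0) = 0.
Proof. induction N; simpl; [lra| rewrite IHN; lra]. Qed.

Lemma fsum_const N c : fsum N (fun _ => c) = INR N * c.
Proof. induction N; simpl fsum; [simpl; lra| rewrite IHN, S_INR; lra]. Qed.

Lemma fsum_nonneg N f : (forall i, (i<N)%nat -> 0 <= f i) -> 0 <= fsum N f.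
Proof. induction N; simpl; intros H; [lra|].
  assert (0 <= fsum N f) by (apply IHN; intros; apply H; lia).
  specialize (H N ltac:(lia)). lra. Qed.

Lemma fsum_le N f g : (forall i, (i<N)%nat -> f i <= g i) -> fsum N f <= fsum N g.
Proof. induction N; simpl; intros H; [lra|].
  assert (fsum N f <= fsum N g) by (apply IHN; intros; apply H; lia).
  specialize (H N ltac:(lia)). lra. Qed.

Lemma fsum_swap N M F : fsum N (fun i => fsum M (fun j => F i j)) = fsum M (fun j => fsum N (fun i => F i j)).
Proof. induction N; simpl. rewrite fsum_zero; auto. rewrite IHN, <- fsum_plus. auto. Qed.

Lemma fsum_term N f k : (k<N)%nat -> (forall i, (i<N)%nat -> 0 <= f i) -> f k <= fsum N f.
Proof. induction N; intros Hk H; [lia|]. simpl.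
  assert (0 <= fsum N f) by (apply fsum_nonneg; intros; apply H; lia).
  destruct (Nat.eq_dec k N).
  - subst. lra.
  - assert (f k <= fsum N f) by (apply IHN; [lia| intros; apply H; lia]).
    specialize (H N ltac:(lia)). lra. Qed.

Lemma fsum_delta N i f : (i < N)%nat -> fsum N (fun a => (if Nat.eqb i a then 1 else 0) * f a) = f i.
Proof. induction N; intros Hi; [lia|]. simpl.
  destruct (Nat.eq_dec i N).
  - subst. rewrite Nat.eqb_refl.
    rewrite (fsum_ext _ _ (fun _ => 0)). rewrite fsum_zero; lra.
    intros a Ha. destruct (Nat.eqb_spec N a); [lia|lra].
  - rewrite IHN by lia. destruct (Nat.eqb_spec i N); [lia|lra]. Qed.

Lemma fsum_delta' N i f : (i < N)%nat -> fsum N (fun a => (if Nat.eqb a i then 1 else 0) * f a) = f i.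
Proof. intros. rewrite <- (fsum_delta N i f) by auto. apply fsum_ext. intros. rewrite Nat.eqb_sym. auto. Qed.

Lemma fsum_telescope n f : fsum n (fun j => f (S j) - f j) = f n - f O.
Proof. induction n; simpl; [lra| rewrite IHn; lra]. Qed.

Lemma fsum_sq N f : (fsum N f)^2 = fsum N (fun a => fsum N (fun a' => f a * f a')).
Proof. transitivity (fsum N (fun a => f a * fsum N f)).
  - rewrite (fsum_mulr N (fsum N f) f). ring.
  - apply fsum_ext. intros. rewrite fsum_scal. auto. Qed.

Lemma sqrt_le_of_sq x y : 0 <= y -> x <= y*y -> sqrt x <= y.
Proof. intros. rewrite <- (sqrt_square y) by auto. apply sqrt_le_1_alt; auto. Qed.

Section Func.
Variable X : Type.
Variable phi : (X -> R) -> R.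
Hypothesis phi_plus : forall f g, phi (fun x => f x + g x) = phi f + phi g.
Hypothesis phi_scal : forall c f, phi (fun x => c * f x) = c * phi f.
Hypothesis phi_nonneg : forall f, (forall x, 0 <= f x) -> 0 <= phi f.

Lemma phi_ext f g : (forall x, f x = g x) -> phi f = phi g.
Proof. intros H. f_equal. extensionality x. auto. Qed.

Lemma phi_zero : phi (fun _ => 0) = 0.
Proof. rewrite (phi_ext _ (fun x => 0 * 0)) by (intros; ring). rewrite (phi_scal 0 (fun _ => 0)). ring. Qed.

Lemma phi_mono f g : (forall x, f x <= g x) -> phi f <= phi g.
Proof. intros H. rewrite (phi_ext g (fun x => f x + 1 * (g x - f x))) by (intros; ring).
  rewrite phi_plus, phi_scal. assert (0 <= phi (fun x => g x - f x)) by (apply phi_nonneg; intros x; specialize (H x); cbv beta; lra). lra. Qed.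

Lemma quad_disc A B C : (forall t, 0 <= A + 2*t*B + t^2*C) -> 0 <= A -> 0 <= C -> B^2 <= A*C.
Proof. intros H HA HC. destruct (Req_dec C 0) as [E|E].
  - subst. destruct (Req_dec B 0) as [EB|EB]. subst. nra.
    specialize (H (-(A+1)/(2*B))). exfalso.
    assert (2 * (-(A+1)/(2*B)) * B = -(A+1)) by (field; auto). nra.
  - assert (HC' : 0 < C) by lra. specialize (H (-B/C)).
    assert (Ht : (-B/C) * C = -B) by (field; lra).
    set (t := -B/C) in *. nra. Qed.

Lemma phi_CS f g : (phi (fun x => f x * g x))^2 <= phi (fun x => f x ^2) * phi (fun x => g x ^2).
Proof. apply quad_disc.
  - intros t. assert (0 <= phi (fun x => (f x + t * g x)^2)) by (apply phi_nonneg; intros; cbv beta; apply pow2_ge_0).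
    rewrite (phi_ext _ (fun x => f x ^2 + ((2*t) * (f x * g x) + t^2 * g x^2))) in H by (intros; ring).
    rewrite phi_plus, phi_plus, phi_scal, phi_scal in H. lra.
  - apply phi_nonneg; intros; cbv beta; apply pow2_ge_0.
  - apply phi_nonneg; intros; cbv beta; apply pow2_ge_0. Qed.

Lemma phi_mink f g : sqrt (phi (fun x => (f x + g x)^2)) <= sqrt (phi (fun x => f x ^2)) + sqrt (phi (fun x => g x^2)).
Proof.
  set (A := phi (fun x => f x ^2)). set (C := phi (fun x => g x ^2)). set (B := phi (fun x => f x * g x)).
  assert (HA : 0 <= A) by (apply phi_nonneg; intros; cbv beta; apply pow2_ge_0).
  assert (HC : 0 <= C) by (apply phi_nonneg; intros; cbv beta; apply pow2_ge_0).
  assert (HB : B^2 <= A * C) by apply phi_CS.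
  rewrite (phi_ext _ (fun x => f x ^2 + (2 * (f x * g x) + g x ^2))) by (intros; ring).
  rewrite phi_plus, phi_plus, phi_scal. fold A B C.
  assert (HsA := sqrt_pos A). assert (HsC := sqrt_pos C).
  assert (B <= sqrt A * sqrt C).
  { destruct (Rle_or_lt B 0). nra. rewrite <- sqrt_mult by auto.
    rewrite <- (sqrt_square B) by lra. apply sqrt_le_1_alt. nra. }
  apply sqrt_le_of_sq. lra.
  assert (sqrt A * sqrt A = A) by (apply sqrt_sqrt; auto).
  assert (sqrt C * sqrt C = C) by (apply sqrt_sqrt; auto). nra. Qed.

Lemma phi_mink_sum N (F : nat -> X -> R) :
  sqrt (phi (fun x => (fsum N (fun j => F j x))^2)) <= fsum N (fun j => sqrt (phi (fun x => (F j x)^2))).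
Proof. induction N; cbn [fsum].
  - rewrite (phi_ext _ (fun _ => 0)) by (intros; ring). rewrite phi_zero, sqrt_0. lra.
  - eapply Rle_trans. apply (phi_mink (fun x => fsum N (fun j => F j x)) (F N)). lra. Qed.

End Func.


Lemma upd_same p i x : upd p i x i = x.
Proof. unfold upd. rewrite Nat.eqb_refl. auto. Qed.
Lemma upd_other p i x j : j <> i -> upd p i x j = p j.
Proof. unfold upd. intros. destruct (Nat.eqb_spec j i); auto; lia. Qed.
Lemma upd_comm p i x j y : i <> j -> upd (upd p i x) j y = upd (upd p j y) i x.
Proof. intros. extensionality k. unfold upd. destruct (Nat.eqb_spec k j), (Nat.eqb_spec k i); auto; lia. Qed.
Lemma upd_upd p i x y : upd (upd p i x) i y = upd p i y.
Proof. extensionality k. unfold upd. destruct (Nat.eqb_spec k i); auto. Qed.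
Lemma upd_id p i : upd p i (p i) = p.
Proof. extensionality k. unfold upd. destruct (Nat.eqb_spec k i); subst; auto. Qed.

Lemma msum_ext n d F G : (forall p, F p = G p) -> msum n d F = msum n d G.
Proof. intros H. f_equal. extensionality p. auto. Qed.

Lemma msum_plus n d F G : msum n d (fun p => F p + G p) = msum n d F + msum n d G.
Proof. revert F G; induction n; intros; simpl; auto.
  rewrite <- IHn. apply msum_ext. intros. apply fsum_plus. Qed.

Lemma msum_scal n d c F : msum n d (fun p => c * F p) = c * msum n d F.
Proof. revert F; induction n; intros; simpl; auto.
  rewrite <- IHn. apply msum_ext. intros. apply fsum_scal. Qed.

Lemma msum_nonneg n d F : (forall p, 0 <= F p) -> 0 <= msum n d F.
Proof. revert F; induction n; intros; simpl; auto.
  apply IHn. intros. apply fsum_nonneg. intros. auto. Qed.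

Lemma msum_mulr n d c F : msum n d (fun p => F p * c) = msum n d F * c.
Proof. rewrite (msum_ext _ _ _ (fun p => c * F p)) by (intros; ring). rewrite msum_scal. ring. Qed.

Lemma msum_zero n d : msum n d (fun _ => 0) = 0.
Proof. rewrite (msum_ext _ _ _ (fun p => 0 * 0)) by (intros; ring). rewrite msum_scal. ring. Qed.

Lemma msum_mono n d F G : (forall p, F p <= G p) -> msum n d F <= msum n d G.
Proof. intros H. rewrite (msum_ext n d G (fun p => F p + (G p - F p))) by (intros; ring).
  rewrite msum_plus. assert (0 <= msum n d (fun p => G p - F p)) by (apply msum_nonneg; intros p; specialize (H p); lra). lra. Qed.

Lemma msum_fsum n d N F : msum n d (fun p => fsum N (fun i => F i p)) = fsum N (fun i => msum n d (F i)).
Proof. induction N; simpl. apply msum_zero. rewrite msum_plus, IHN. auto. Qed.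

Definition Lam (k : nat) (d : nat -> nat) (F : (nat->nat)->R) : (nat->nat)->R :=
  fun p => fsum (d k) (fun x => F (upd p k x)).

Fixpoint rs (lo m : nat) (d : nat -> nat) (F : (nat->nat)->R) : (nat->nat)->R :=
  match m with O => F | S m' => rs lo m' d (Lam (lo+m') d F) end.

Definition zp : nat -> nat := fun _ => O.

Lemma msum_rs n d F : msum n d F = rs 0 n d F zp.
Proof. revert F; induction n; intros; simpl; auto. Qed.

Lemma rs_split lo k m d F : rs lo (k+m) d F = rs lo k d (rs (lo+k) m d F).
Proof. revert F; induction m; intros.
  - rewrite Nat.add_0_r. reflexivity.
  - rewrite Nat.add_succ_r. simpl. rewrite IHm. rewrite Nat.add_assoc. reflexivity. Qed.

Lemma rs_ext lo m d F G : (forall p, F p = G p) -> rs lo m d F = rs lo m d G.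
Proof. intros H. f_equal. extensionality p. auto. Qed.

Lemma rs_mul lo m d f g p : (forall q i x, (lo <= i < lo+m)%nat -> f (upd q i x) = f q) ->
  rs lo m d (fun q => f q * g q) p = f p * rs lo m d g p.
Proof. revert g p; induction m; intros g p Hf; simpl; auto.
  rewrite (rs_ext _ _ _ _ (fun q => f q * Lam (lo+m)%nat d g q)).
  - apply IHm. intros. apply Hf. lia.
  - intros q. unfold Lam. rewrite <- fsum_scal. apply fsum_ext. intros. rewrite Hf by lia. auto. Qed.

Lemma rs_inv lo m d g : (forall q i x, (i < lo)%nat -> g (upd q i x) = g q) ->
  forall q i x, (i<lo)%nat -> rs lo m d g (upd q i x) = rs lo m d g q.
Proof. revert g; induction m; intros g Hg; simpl; auto.
  apply IHm. intros. unfold Lam. apply fsum_ext. intros.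
  rewrite upd_comm by lia. apply Hg. auto. Qed.

Lemma rs_plus lo m d F G p : rs lo m d (fun q => F q + G q) p = rs lo m d F p + rs lo m d G p.
Proof. revert F G p; induction m; intros; simpl; auto.
  rewrite <- IHm. f_equal. f_equal. extensionality q. unfold Lam. apply fsum_plus. Qed.

Lemma rs_zero lo m d p : rs lo m d (fun _ => 0) p = 0.
Proof. revert p; induction m; intros; simpl; auto.
  rewrite (rs_ext _ _ _ _ (fun _ => 0)). auto. intros. unfold Lam. apply fsum_zero. Qed.

Lemma rs_fsum lo m d N F p : rs lo m d (fun q => fsum N (fun i => F i q)) p = fsum N (fun i => rs lo m d (F i) p).
Proof. induction N; simpl. apply rs_zero. rewrite rs_plus, IHN. auto. Qed.

Lemma msum_split k m d f g :
  (forall q i x, (k <= i)%nat -> f (upd q i x) = f q) ->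
  (forall q i x, (i < k)%nat -> g (upd q i x) = g q) ->
  msum (k+m) d (fun p => f p * g p) = msum k d f * rs k m d g zp.
Proof. intros Hf Hg. rewrite !msum_rs, rs_split. simpl (0+k)%nat.
  assert (E : rs k m d (fun q => f q * g q) = fun q => rs k m d g q * f q).
  { extensionality q. rewrite rs_mul. ring. intros. apply Hf. lia. }
  rewrite E. rewrite rs_mul. ring.
  intros. apply rs_inv; auto. lia. Qed.

Definition valid (n : nat) (d : nat -> nat) (p : nat -> nat) : Prop :=
  (forall j, (j < n)%nat -> (p j < d j)%nat) /\ (forall j, (n <= j)%nat -> p j = O).

Lemma rs_ge lo m d F p p' : (forall q, 0 <= F q) ->
  (forall i, (lo <= i < lo+m)%nat -> (p' i < d i)%nat) ->
  (forall i, ~(lo <= i < lo+m)%nat -> p' i = p i) ->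
  F p' <= rs lo m d F p.
Proof. revert F p'; induction m; intros F p' HF H1 H2; simpl.
  - replace p' with p. lra. extensionality i. rewrite H2; auto. lia.
  - eapply Rle_trans; [| apply (IHm _ (upd p' (lo+m)%nat (p (lo+m)%nat)))].
    + unfold Lam. rewrite (fsum_ext _ _ (fun x => F (upd p' (lo+m)%nat x))) by (intros; rewrite upd_upd; auto).
      assert (E: F p' = F (upd p' (lo+m)%nat (p' (lo+m)%nat))) by (rewrite upd_id; auto). rewrite E.
      apply (fsum_term _ (fun x => F (upd p' (lo+m)%nat x))). apply H1; lia. intros; auto.
    + intros. unfold Lam. apply fsum_nonneg. intros. auto.
    + intros. rewrite upd_other by lia. apply H1. lia.
    + intros. destruct (Nat.eq_dec i (lo+m)%nat). subst. rewrite upd_same. auto.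
      rewrite upd_other by auto. apply H2. lia. Qed.

Lemma msum_ge n d F p : (forall q, 0 <= F q) -> valid n d p -> F p <= msum n d F.
Proof. intros HF [H1 H2]. rewrite msum_rs. apply rs_ge; auto.
  intros. apply H1. lia. intros. unfold zp. apply H2. lia. Qed.

Lemma rs_ext_valid lo m d F G p :
  (forall p', (forall i, (lo <= i < lo+m)%nat -> (p' i < d i)%nat) ->
     (forall i, ~(lo <= i < lo+m)%nat -> p' i = p i) -> F p' = G p') ->
  rs lo m d F p = rs lo m d G p.
Proof. revert F G p; induction m; intros F G p H; simpl.
  - apply H. intros; lia. auto.
  - apply IHm. intros p' H1 H2. unfold Lam. apply fsum_ext. intros x Hx. apply H.
    + intros. destruct (Nat.eq_dec i (lo+m)%nat). subst. rewrite upd_same. auto.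
      rewrite upd_other by auto. apply H1. lia.
    + intros. rewrite upd_other by lia. apply H2. lia. Qed.

Lemma msum_ext_valid n d F G : (forall p, valid n d p -> F p = G p) -> msum n d F = msum n d G.
Proof. intros H. rewrite !msum_rs. apply rs_ext_valid. intros p' H1 H2. apply H. split.
  intros. apply H1. lia. intros. rewrite H2. auto. lia. Qed.


Lemma fsum_CS N f g : (fsum N (fun i => f i * g i))^2 <= fsum N (fun i => f i ^2) * fsum N (fun i => g i ^2).
Proof. apply (phi_CS nat (fsum N)).
  - intros. apply fsum_plus. - intros. apply fsum_scal. - intros. apply fsum_nonneg. auto. Qed.

Definition phi_frob k d D : ((nat->nat)*nat -> R) -> R :=
  fun F => msum k d (fun p => fsum D (fun b => F (p,b))).

Lemma frob_mink k d D (V V' : (nat->nat) -> nat -> R) :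
  sqrt (msum k d (fun p => fsum D (fun b => (V p b + V' p b)^2))) <=
  sqrt (msum k d (fun p => fsum D (fun b => (V p b)^2))) + sqrt (msum k d (fun p => fsum D (fun b => (V' p b)^2))).
Proof. exact (phi_mink _ (phi_frob k d D)
   ltac:(intros; unfold phi_frob; rewrite <- msum_plus; apply msum_ext; intros; apply fsum_plus)
   ltac:(intros; unfold phi_frob; rewrite <- msum_scal; apply msum_ext; intros; apply fsum_scal)
   ltac:(intros; unfold phi_frob; apply msum_nonneg; intros; apply fsum_nonneg; auto)
   (fun x => V (fst x) (snd x)) (fun x => V' (fst x) (snd x))). Qed.

Lemma msum_mink_sum n d N (F : nat -> (nat->nat) -> R) :
  sqrt (msum n d (fun p => (fsum N (fun j => F j p))^2)) <= fsum N (fun j => sqrt (msum n d (fun p => (F j p)^2))).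
Proof. exact (phi_mink_sum _ (msum n d) (msum_plus n d) (msum_scal n d) (msum_nonneg n d) N F). Qed.

Definition sn (dl dp dr : nat) (S : site) : R :=
  fsum dl (fun a => fsum dp (fun x => fsum dr (fun b => (S a x b) ^ 2))).

Lemma site_norm_sn dl dp dr S : site_norm dl dp dr S = sqrt (sn dl dp dr S).
Proof. reflexivity. Qed.

Lemma sn_nonneg dl dp dr S : 0 <= sn dl dp dr S.
Proof. unfold sn. repeat (apply fsum_nonneg; intros). apply pow2_ge_0. Qed.

Definition phi_site dl dp dr : (nat*nat*nat -> R) -> R :=
  fun F => fsum dl (fun a => fsum dp (fun x => fsum dr (fun b => F (a,x,b)))).

Lemma site_mink dl dp dr (S1 S2 : site) :
  site_norm dl dp dr (fun a x b => S1 a x b + S2 a x b) <= site_norm dl dp dr S1 + site_norm dl dp dr S2.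
Proof. unfold site_norm. exact (phi_mink _ (phi_site dl dp dr)
   ltac:(intros; unfold phi_site; rewrite <- fsum_plus; apply fsum_ext; intros;
         rewrite <- fsum_plus; apply fsum_ext; intros; apply fsum_plus)
   ltac:(intros; unfold phi_site; rewrite <- fsum_scal; apply fsum_ext; intros;
         rewrite <- fsum_scal; apply fsum_ext; intros; apply fsum_scal)
   ltac:(intros; unfold phi_site; repeat (apply fsum_nonneg; intros); auto)
   (fun x => S1 (fst (fst x)) (snd (fst x)) (snd x)) (fun x => S2 (fst (fst x)) (snd (fst x)) (snd x))). Qed.

Lemma sn_scal dl dp dr c S : sn dl dp dr (fun a x b => c * S a x b) = c^2 * sn dl dp dr S.
Proof. unfold sn. rewrite <- fsum_scal. apply fsum_ext; intros. rewrite <- fsum_scal. apply fsum_ext; intros.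
  rewrite <- fsum_scal. apply fsum_ext; intros. ring. Qed.


Lemma cv_agree Db A p p' k : (forall i, (i<k)%nat -> p i = p' i) -> contr_vec Db A p k = contr_vec Db A p' k.
Proof. induction k; simpl; intros H; auto. rewrite IHk by (intros; apply H; lia). rewrite H by lia. reflexivity. Qed.

Lemma cv_upd Db A p k i x : (k <= i)%nat -> contr_vec Db A (upd p i x) k = contr_vec Db A p k.
Proof. intros. apply cv_agree. intros. rewrite upd_other by lia. auto. Qed.

Lemma cv_sites Db A B p k : (forall i, (i<k)%nat -> A i = B i) -> contr_vec Db A p k = contr_vec Db B p k.
Proof. induction k; simpl; intros H; auto. rewrite IHk by (intros; apply H; lia). rewrite H by lia. reflexivity. Qed.

Fixpoint cfrom (Db : nat -> nat) (A : mps) (p : nat -> nat) (k m : nat) (v : nat -> R) : nat -> R :=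
  match m with
  | O => v
  | S m' => fun b => fsum (Db (k+m')%nat) (fun a => cfrom Db A p k m' v a * A (k+m')%nat a (p (k+m')%nat) b)
  end.

Lemma cv_cfrom Db A p k m : contr_vec Db A p (k+m) = cfrom Db A p k m (contr_vec Db A p k).
Proof. induction m.
  - rewrite Nat.add_0_r. reflexivity.
  - rewrite Nat.add_succ_r. simpl. rewrite IHm. reflexivity. Qed.

Lemma cfrom_agree Db A p p' k m v : (forall i, (k <= i < k+m)%nat -> p i = p' i) -> cfrom Db A p k m v = cfrom Db A p' k m v.
Proof. induction m; simpl; intros H; auto. rewrite IHm by (intros; apply H; lia). rewrite H by lia. reflexivity. Qed.

Lemma cfrom_upd Db A p k m v i x : (i < k)%nat -> cfrom Db A (upd p i x) k m v = cfrom Db A p k m v.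
Proof. intros. apply cfrom_agree. intros. rewrite upd_other by lia. auto. Qed.

Lemma cfrom_sites Db A B p k m v : (forall i, (k <= i < k+m)%nat -> A i = B i) -> cfrom Db A p k m v = cfrom Db B p k m v.
Proof. induction m; simpl; intros H; auto. rewrite IHm by (intros; apply H; lia). rewrite H by lia. reflexivity. Qed.

Definition ev (c : nat) : nat -> R := fun b => if Nat.eqb b c then 1 else 0.

Lemma cfrom_decomp Db A p k m v b : (b < Db (k+m))%nat ->
  cfrom Db A p k m v b = fsum (Db k) (fun c => v c * cfrom Db A p k m (ev c) b).
Proof. revert b; induction m; intros b Hb.
  - rewrite Nat.add_0_r in Hb. simpl. unfold ev.
    rewrite (fsum_ext _ _ (fun c => (if Nat.eqb b c then 1 else 0) * v c)).
    + rewrite fsum_delta; auto.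
    + intros. rewrite Nat.eqb_sym. ring.
  - simpl.
    rewrite (fsum_ext _ _ (fun a => fsum (Db k) (fun c => v c * (cfrom Db A p k m (ev c) a * A (k+m)%nat a (p (k+m)%nat) b)))).
    + rewrite fsum_swap. apply fsum_ext. intros. rewrite fsum_scal. auto.
    + intros a Ha. rewrite IHm by auto. rewrite <- fsum_mulr. apply fsum_ext. intros. ring. Qed.


Lemma msum_S k d F : msum (S k) d F = msum k d (Lam k d F).
Proof. reflexivity. Qed.

Lemma fsum_prod N M f g : fsum N f * fsum M g = fsum N (fun a => fsum M (fun a' => f a * g a')).
Proof. rewrite <- fsum_mulr. apply fsum_ext. intros. rewrite fsum_scal. auto. Qed.

Lemma fsum3 N1 N2 N3 G : fsum N1 (fun x => fsum N2 (fun b => fsum N3 (fun a => G x b a))) =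
  fsum N3 (fun a => fsum N1 (fun x => fsum N2 (fun b => G x b a))).
Proof. rewrite (fsum_ext N1 _ (fun x => fsum N3 (fun a => fsum N2 (fun b => G x b a)))) by (intros; apply fsum_swap).
  apply fsum_swap. Qed.

Lemma fsum4 N1 N2 N3 N4 G : fsum N1 (fun x => fsum N2 (fun b => fsum N3 (fun a => fsum N4 (fun a' => G x b a a')))) =
  fsum N3 (fun a => fsum N4 (fun a' => fsum N1 (fun x => fsum N2 (fun b => G x b a a')))).
Proof. rewrite fsum3. apply fsum_ext. intros a _. rewrite fsum3. auto. Qed.

Lemma qf k d N (Y : (nat->nat) -> nat -> R) (M : nat -> nat -> R) :
  (forall a a', (a < N)%nat -> (a' < N)%nat -> msum k d (fun p => Y p a * Y p a') = if Nat.eqb a a' then 1 else 0) ->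
  msum k d (fun p => fsum N (fun a => fsum N (fun a' => Y p a * Y p a' * M a a'))) = fsum N (fun a => M a a).
Proof. intros HG. rewrite msum_fsum. apply fsum_ext. intros a Ha.
  rewrite msum_fsum. rewrite (fsum_ext _ _ (fun a' => (if Nat.eqb a a' then 1 else 0) * M a a')).
  apply fsum_delta; auto.
  intros a' Ha'. rewrite msum_mulr, HG; auto. Qed.

Lemma cv_S_upd Db A p k x b : contr_vec Db A (upd p k x) (S k) b = fsum (Db k) (fun a => contr_vec Db A p k a * A k a x b).
Proof. simpl. rewrite cv_upd by lia. rewrite upd_same. auto. Qed.

Lemma gram n d Db C : Db O = 1%nat -> left_canonical n d Db C -> forall k, (k < n)%nat ->
  forall b b', (b < Db k)%nat -> (b' < Db k)%nat ->
  msum k d (fun p => contr_vec Db C p k b * contr_vec Db C p k b') = if Nat.eqb b b' then 1 else 0.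
Proof. intros H0 HL k. induction k; intros Hk b b' Hb Hb'.
  - rewrite H0 in Hb, Hb'. assert (b = O) by lia. assert (b' = O) by lia. subst. simpl. ring.
  - rewrite msum_S. unfold Lam.
    rewrite (msum_ext _ _ _ (fun p => fsum (Db k) (fun a => fsum (Db k) (fun a' =>
       contr_vec Db C p k a * contr_vec Db C p k a' * fsum (d k) (fun x => C k a x b * C k a' x b'))))).
    + rewrite qf. apply HL; auto.
      intros. apply IHk; auto. lia.
    + intros p. rewrite (fsum_ext _ _ (fun x => fsum (Db k) (fun a => fsum (Db k) (fun a' =>
         contr_vec Db C p k a * contr_vec Db C p k a' * (C k a x b * C k a' x b'))))).
      * rewrite fsum_swap. apply fsum_ext. intros. rewrite fsum_swap. apply fsum_ext. intros.
        rewrite fsum_scal. auto.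
      * intros. rewrite !cv_S_upd. rewrite fsum_prod. apply fsum_ext. intros. apply fsum_ext. intros. ring. Qed.

Lemma Xlemma k d Db Dr (W : (nat->nat) -> nat -> R) (be : site) :
  (forall p x, W (upd p k x) = W p) ->
  (forall a a', (a < Db k)%nat -> (a' < Db k)%nat -> msum k d (fun p => W p a * W p a') = if Nat.eqb a a' then 1 else 0) ->
  msum (S k) d (fun p => fsum Dr (fun b => (fsum (Db k) (fun a => W p a * be a (p k) b))^2)) = sn (Db k) (d k) Dr be.
Proof. intros HW HG. rewrite msum_S. unfold Lam.
  rewrite (msum_ext _ _ _ (fun p => fsum (Db k) (fun a => fsum (Db k) (fun a' =>
       W p a * W p a' * fsum (d k) (fun x => fsum Dr (fun b => be a x b * be a' x b)))))).
  - rewrite qf by auto. unfold sn. apply fsum_ext. intros. apply fsum_ext. intros. apply fsum_ext. intros. ring.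
  - intros p. rewrite (fsum_ext _ _ (fun x => fsum Dr (fun b => fsum (Db k) (fun a => fsum (Db k) (fun a' =>
         W p a * W p a' * (be a x b * be a' x b)))))).
    + rewrite fsum4. apply fsum_ext. intros. apply fsum_ext. intros.
      rewrite <- fsum_scal. apply fsum_ext. intros. rewrite fsum_scal. auto.
    + intros x _. apply fsum_ext. intros b _. rewrite HW, upd_same. rewrite fsum_sq.
      apply fsum_ext. intros. apply fsum_ext. intros. ring. Qed.

Lemma PBlemma k d Dl Dr (Y : (nat->nat) -> nat -> R) (be : site) :
  (forall p x, Y (upd p k x) = Y p) ->
  msum (S k) d (fun p => fsum Dr (fun b => (fsum Dl (fun a => Y p a * be a (p k) b))^2)) <=
  msum k d (fun p => fsum Dl (fun a => Y p a ^2)) * sn Dl (d k) Dr be.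
Proof. intros HY. rewrite msum_S. unfold Lam. rewrite <- msum_mulr. apply msum_mono. intros p.
  eapply Rle_trans.
  - apply fsum_le. intros x _. apply fsum_le. intros b _. rewrite HY, upd_same. apply fsum_CS.
  - unfold sn. rewrite <- (fsum3 (d k) Dr Dl (fun x b a => be a x b ^ 2)). rewrite <- fsum_scal. apply Req_le. apply fsum_ext. intros x _.
    rewrite <- fsum_scal. apply fsum_ext. intros b _. auto. Qed.


Lemma fsum_last N f : (1 <= N)%nat -> fsum N f = fsum (N-1) f + f (N-1)%nat.
Proof. intros. destruct N; [lia|]. simpl. replace (N-0)%nat with N by lia. auto. Qed.

Section GUB.
Variables (n : nat) (d DC : nat -> nat) (C be : mps).
Hypothesis Hn : (1 <= n)%nat.
Hypothesis Hb : bonds_ok n DC.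
Hypothesis HL : left_canonical n d DC C.

Definition P := perturb C be.
Definition ej (j : nat) : R :=
  sqrt (msum j d (fun p => fsum (DC j) (fun a => (contr_vec DC P p j a - contr_vec DC C p j a)^2))).

Lemma gramC k : (k < n)%nat -> forall a a', (a < DC k)%nat -> (a' < DC k)%nat ->
  msum k d (fun p => contr_vec DC C p k a * contr_vec DC C p k a') = if Nat.eqb a a' then 1 else 0.
Proof. intros. destruct Hb. eapply gram; eauto. Qed.

Lemma e_rec j : (j < n)%nat ->
  ej (S j) <= ej j * site_norm_at d DC P j + site_norm_at d DC be j.
Proof. intros Hj. unfold ej.
  rewrite (msum_ext _ _ _ (fun p => fsum (DC (S j)) (fun b =>
     (fsum (DC j) (fun a => (contr_vec DC P p j a - contr_vec DC C p j a) * P j a (p j) b)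
      + fsum (DC j) (fun a => contr_vec DC C p j a * be j a (p j) b))^2))).
  - eapply Rle_trans. apply frob_mink. apply Rplus_le_compat.
    + unfold site_norm_at. rewrite site_norm_sn. rewrite <- sqrt_mult; [| apply msum_nonneg; intros; apply fsum_nonneg; intros; apply pow2_ge_0 | apply sn_nonneg].
      apply sqrt_le_1_alt. apply (PBlemma j d (DC j) (DC (S j)) (fun p a => contr_vec DC P p j a - contr_vec DC C p j a)).
      intros. rewrite !cv_upd by lia. auto.
    + rewrite Xlemma. apply Req_le. reflexivity.
      intros. rewrite cv_upd by lia. auto.
      intros. apply gramC; auto.
  - intros p. apply fsum_ext. intros b _. f_equal. simpl. unfold P at 1 3, perturb.
    rewrite <- fsum_plus, <- fsum_sub. apply fsum_ext. intros. unfold P, perturb. ring. Qed.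

Lemma e0 : ej O = 0.
Proof. unfold ej. simpl msum. rewrite (fsum_ext _ _ (fun _ => 0)) by (intros; simpl; ring).
  rewrite fsum_zero, sqrt_0. auto. Qed.

Lemma ej_nonneg j : 0 <= ej j.
Proof. apply sqrt_pos. Qed.

Lemma sna_nonneg (A : mps) j : 0 <= site_norm_at d DC A j.
Proof. apply sqrt_pos. Qed.

Definition Ns := fsum n (fun j => site_norm_at d DC C j).
Definition Q := 2 * Ns + 1.

Lemma Ns_ge j : (j < n)%nat -> site_norm_at d DC C j <= Ns.
Proof. intros. unfold Ns. apply (fsum_term n (fun j => site_norm_at d DC C j)); auto. intros; apply sna_nonneg. Qed.

Lemma Ns_nonneg : 0 <= Ns.
Proof. unfold Ns. apply fsum_nonneg. intros; apply sna_nonneg. Qed.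

Lemma P_norm j : site_norm_at d DC P j <= site_norm_at d DC C j + site_norm_at d DC be j.
Proof. unfold site_norm_at. apply (site_mink _ _ _ (C j) (be j)). Qed.

Lemma e_bound eps : 0 <= eps < 1 -> is_perturbation n d DC C eps be ->
  forall j, (j <= n)%nat -> ej j <= eps * Q ^ (S j).
Proof. intros He HP j. induction j; intros Hj.
  - rewrite e0. assert (0 <= Q) by (unfold Q; generalize Ns_nonneg; lra).
    assert (0 <= Q ^ 1) by (apply pow_le; auto). nra.
  - assert (Hj' : (j < n)%nat) by lia.
    specialize (IHj ltac:(lia)).
    assert (H1 := e_rec j Hj'). assert (H2 := P_norm j). assert (H3 := HP j Hj').
    assert (H4 := Ns_ge j Hj'). assert (H5 := ej_nonneg j).
    assert (H6 := sna_nonneg C j). assert (H7 := sna_nonneg be j). assert (H8 := Ns_nonneg).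
    assert (HQ1 : 1 <= Q) by (unfold Q; lra).
    assert (HQ : Q <= Q ^ (S j)) by (rewrite <- (pow_1 Q) at 1; apply Rle_pow; auto; lia).
    replace (Q ^ S (S j)) with (Q ^ (S j) * Q) by (simpl; ring).
    set (q := Q ^ S j) in *. unfold Q in *.
    assert (site_norm_at d DC P j <= 2 * Ns) by nra.
    assert (ej j * site_norm_at d DC P j <= eps * q * (2 * Ns)).
    { apply Rmult_le_compat; auto. apply sna_nonneg. }
    assert (site_norm_at d DC be j <= eps * Ns) by nra.
    assert (eps * Ns <= eps * q) by nra.
    nra. Qed.


Definition hyb (j : nat) : mps := fun k => if Nat.ltb k j then P k else C k.
Definition Rv (p : nat -> nat) (c j : nat) : R := cfrom DC C p (S j) (n - S j) (ev c) O.
Definition Xp (p : nat -> nat) (c j : nat) : R := fsum (DC j) (fun a => contr_vec DC P p j a * be j a (p j) c).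

Lemma contract_split (A : mps) j p : (j < n)%nat -> (forall i, (S j <= i)%nat -> A i = C i) ->
  contr_vec DC A p n O = fsum (DC (S j)) (fun c => contr_vec DC A p (S j) c * Rv p c j).
Proof. intros Hj HA.
  replace (contr_vec DC A p n) with (contr_vec DC A p (S j + (n - S j))) by (f_equal; lia).
  rewrite cv_cfrom. rewrite cfrom_decomp.
  - apply fsum_ext. intros c _. unfold Rv. f_equal. rewrite (cfrom_sites DC A C); auto. intros. apply HA. lia.
  - replace (S j + (n - S j))%nat with n by lia. destruct Hb as [_ H]. rewrite H. lia. Qed.

Lemma delta_formula j p : (j < n)%nat ->
  contract n DC (hyb (S j)) p - contract n DC (hyb j) p = fsum (DC (S j)) (fun c => Xp p c j * Rv p c j).
Proof. intros Hj. unfold contract.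
  rewrite (contract_split (hyb (S j)) j p Hj), (contract_split (hyb j) j p Hj).
  - rewrite <- fsum_sub. apply fsum_ext. intros c _. rewrite <- Rmult_minus_distr_r. f_equal.
    simpl. rewrite (cv_sites DC (hyb (S j)) P), (cv_sites DC (hyb j) P).
    + unfold Xp. rewrite <- fsum_sub. apply fsum_ext. intros a _. unfold hyb.
      rewrite (proj2 (Nat.ltb_lt j (S j))) by lia. rewrite Nat.ltb_irrefl. unfold P, perturb. ring.
    + intros. unfold hyb. rewrite (proj2 (Nat.ltb_lt i j)) by lia. auto.
    + intros. unfold hyb. rewrite (proj2 (Nat.ltb_lt i (S j))) by lia. auto.
  - intros. unfold hyb. rewrite (proj2 (Nat.ltb_ge i j)) by lia. auto.
  - intros. unfold hyb. rewrite (proj2 (Nat.ltb_ge i (S j))) by lia. auto. Qed.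


Lemma rs_ge_0 lo m F p : (forall q, 0 <= F q) -> 0 <= rs lo m d F p.
Proof. revert F p. induction m; intros; simpl; auto. apply IHm. intros. unfold Lam. apply fsum_nonneg. auto. Qed.

Definition tau (j : nat) : R := rs (S j) (n - S j) d (fun p => fsum (DC (S j)) (fun c => Rv p c j ^ 2)) zp.

Lemma term_bound j : (j < n)%nat ->
  sqrt (msum n d (fun p => (contract n DC (hyb (S j)) p - contract n DC (hyb j) p)^2)) <=
  sqrt (msum (S j) d (fun p => fsum (DC (S j)) (fun c => Xp p c j ^ 2))) * sqrt (tau j).
Proof. intros Hj.
  rewrite (msum_ext _ _ _ (fun p => (fsum (DC (S j)) (fun c => Xp p c j * Rv p c j))^2))
    by (intros; rewrite delta_formula; auto).
  assert (N1 : 0 <= msum (S j) d (fun p => fsum (DC (S j)) (fun c => Xp p c j ^ 2)))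
    by (apply msum_nonneg; intros; apply fsum_nonneg; intros; apply pow2_ge_0).
  assert (N2 : 0 <= tau j) by (apply rs_ge_0; intros; apply fsum_nonneg; intros; apply pow2_ge_0).
  rewrite <- sqrt_mult by auto.
  apply sqrt_le_1_alt. eapply Rle_trans. apply msum_mono. intros p. apply fsum_CS.
  replace (msum n d) with (msum (S j + (n - S j)) d) by (f_equal; lia).
  pose proof (msum_split (S j) (n - S j) d (fun p => fsum (DC (S j)) (fun c => Xp p c j ^ 2))
     (fun p => fsum (DC (S j)) (fun c => Rv p c j ^ 2))) as HS. cbv beta in HS. rewrite HS.
  - unfold tau. lra.
  - intros q i x Hi. apply fsum_ext. intros c _. unfold Xp. f_equal. apply fsum_ext. intros a _.
    rewrite cv_upd by lia. rewrite upd_other by lia. auto.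
  - intros q i x Hi. apply fsum_ext. intros c _. unfold Rv. rewrite cfrom_upd by lia. auto.
Qed.

Lemma Xp_bound j : (j < n)%nat ->
  sqrt (msum (S j) d (fun p => fsum (DC (S j)) (fun c => Xp p c j ^ 2))) <= (1 + ej j) * site_norm_at d DC be j.
Proof. intros Hj.
  rewrite (msum_ext _ _ _ (fun p => fsum (DC (S j)) (fun c =>
     (fsum (DC j) (fun a => contr_vec DC C p j a * be j a (p j) c)
      + fsum (DC j) (fun a => (contr_vec DC P p j a - contr_vec DC C p j a) * be j a (p j) c))^2))).
  - eapply Rle_trans. apply frob_mink. cbv beta.
    pose proof (Xlemma j d DC (DC (S j)) (fun p a => contr_vec DC C p j a) (be j)) as HX. cbv beta in HX.
    rewrite HX; [| intros; rewrite cv_upd by lia; auto | intros; apply gramC; auto].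
    unfold site_norm_at. rewrite site_norm_sn.
    assert (sqrt (msum (S j) d (fun p => fsum (DC (S j)) (fun b =>
       (fsum (DC j) (fun a => (contr_vec DC P p j a - contr_vec DC C p j a) * be j a (p j) b))^2)))
       <= ej j * sqrt (sn (DC j) (d j) (DC (S j)) (be j))).
    { unfold ej. rewrite <- sqrt_mult; [| apply msum_nonneg; intros; apply fsum_nonneg; intros; apply pow2_ge_0 | apply sn_nonneg].
      apply sqrt_le_1_alt. apply (PBlemma j d (DC j) (DC (S j)) (fun p a => contr_vec DC P p j a - contr_vec DC C p j a)).
      intros. rewrite !cv_upd by lia. auto. }
    lra.
  - intros p. apply fsum_ext. intros c _. unfold Xp. f_equal. rewrite <- fsum_plus. apply fsum_ext. intros. ring. Qed.

Lemma tau_last j : S j = n -> tau j = 1.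
Proof. intros Hj. unfold tau, Rv. replace (n - S j)%nat with O by lia. simpl rs. simpl cfrom.
  rewrite Hj. destruct Hb as [_ H]. rewrite H. simpl. unfold ev. simpl. ring. Qed.

Lemma tau_mid j : (S j < n)%nat -> tau j = msum n d (fun p => contract n DC C p ^ 2).
Proof. intros Hj. symmetry.
  rewrite (msum_ext _ _ _ (fun p => fsum (DC (S j)) (fun c => fsum (DC (S j)) (fun c' =>
     (contr_vec DC C p (S j) c * contr_vec DC C p (S j) c') * (Rv p c j * Rv p c' j))))).
  - replace (msum n d) with (msum (S j + (n - S j)) d) by (f_equal; lia).
    rewrite msum_fsum. unfold tau. rewrite rs_fsum. apply fsum_ext. intros c Hc.
    rewrite msum_fsum.
    rewrite (fsum_ext _ _ (fun c' => (if Nat.eqb c c' then 1 else 0) * rs (S j) (n - S j) d (fun p => Rv p c j * Rv p c' j) zp)).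
    + rewrite fsum_delta by auto. f_equal. extensionality q. ring.
    + intros c' Hc'.
      pose proof (msum_split (S j) (n - S j) d (fun p => contr_vec DC C p (S j) c * contr_vec DC C p (S j) c')
         (fun p => Rv p c j * Rv p c' j)) as HS. cbv beta in HS. rewrite HS.
      * rewrite gramC; auto.
      * intros. rewrite !cv_upd by lia. auto.
      * intros. unfold Rv. rewrite !cfrom_upd by lia. auto.
  - intros p. unfold contract. rewrite (contract_split C j p) by (auto; lia).
    rewrite fsum_sq. apply fsum_ext. intros. apply fsum_ext. intros. ring. Qed.

Lemma sn_mid j : (S j < n)%nat -> sn (DC j) (d j) (DC (S j)) (C j) = INR (DC (S j)).
Proof. intros Hj. unfold sn. rewrite fsum3. rewrite <- (Rmult_1_r (INR _)). rewrite <- fsum_const.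
  apply fsum_ext. intros b Hb'. pose proof (HL j Hj b b Hb' Hb') as HH. rewrite Nat.eqb_refl in HH. rewrite <- HH.
  apply fsum_ext. intros. apply fsum_ext. intros. ring. Qed.

Lemma sn_last j : S j = n -> sn (DC j) (d j) (DC (S j)) (C j) = msum n d (fun p => contract n DC C p ^ 2).
Proof. intros Hj. rewrite <- Xlemma with (W := fun p a => contr_vec DC C p j a).
  - rewrite Hj. apply msum_ext. intros p. destruct Hb as [_ H]. rewrite H. simpl fsum.
    unfold contract. rewrite <- Hj. simpl contr_vec. ring.
  - intros. rewrite cv_upd by lia. auto.
  - intros. apply gramC; auto. lia. Qed.

Definition Zc := sqrt (msum n d (fun p => contract n DC C p ^ 2)).

Lemma term_final (D : nat) eps j : 0 <= eps < 1 -> is_perturbation n d DC C eps be ->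
  (forall j, (1 <= j)%nat -> (j <= n-1)%nat -> (DC j <= D)%nat) -> (j < n)%nat ->
  sqrt (msum n d (fun p => (contract n DC (hyb (S j)) p - contract n DC (hyb j) p)^2)) <=
  eps * (1 + eps * Q ^ n) * Zc * (if Nat.ltb (S j) n then sqrt (INR D) else 1).
Proof. intros He HP HD Hj.
  eapply Rle_trans. apply term_bound; auto.
  assert (HX := Xp_bound j Hj).
  assert (HE : ej j <= eps * Q ^ n).
  { eapply Rle_trans. apply (e_bound eps He HP j). lia.
    apply Rmult_le_compat_l. lra. apply Rle_pow. unfold Q; generalize Ns_nonneg; lra. lia. }
  assert (HB := HP j Hj).
  assert (H0e := ej_nonneg j). assert (H0B := sna_nonneg be j). assert (H0N := sna_nonneg C j).
  assert (HZ : 0 <= Zc) by apply sqrt_pos.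
  assert (HQ : 0 <= Q ^ n) by (apply pow_le; unfold Q; generalize Ns_nonneg; lra).
  set (X := sqrt (msum (S j) d (fun p => fsum (DC (S j)) (fun c => Xp p c j ^ 2)))) in *.
  assert (HX0 : 0 <= X) by apply sqrt_pos.
  destruct (Nat.ltb_spec (S j) n) as [Hlt|Hge].
  - rewrite tau_mid by auto. fold Zc.
    assert (HN : site_norm_at d DC C j <= sqrt (INR D)).
    { unfold site_norm_at. rewrite site_norm_sn. rewrite sn_mid by auto. apply sqrt_le_1_alt. apply le_INR. apply HD; lia. }
    assert (X <= (1 + eps * Q ^ n) * (eps * sqrt (INR D))).
    { eapply Rle_trans. apply HX. apply Rmult_le_compat; try lra. nra. }
    assert (0 <= sqrt (INR D)) by apply sqrt_pos.
    replace (eps * (1 + eps * Q ^ n) * Zc * sqrt (INR D)) with ((1 + eps * Q ^ n) * (eps * sqrt (INR D)) * Zc) by ring.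
    apply Rmult_le_compat_r; auto.
  - assert (Hs : S j = n) by lia. rewrite tau_last by auto. rewrite sqrt_1.
    assert (HN : site_norm_at d DC C j = Zc).
    { unfold site_norm_at. rewrite site_norm_sn. rewrite sn_last by auto. reflexivity. }
    rewrite HN in HB.
    assert (X <= (1 + eps * Q ^ n) * (eps * Zc)).
    { eapply Rle_trans. apply HX. apply Rmult_le_compat; try lra. }
    nra. Qed.

Theorem GUB (D : nat) eps : 0 <= eps < 1 -> is_perturbation n d DC C eps be ->
  (forall j, (1 <= j)%nat -> (j <= n-1)%nat -> (DC j <= D)%nat) ->
  rel_err n d DC C be <= eps * (1 + eps * Q ^ n) * (1 + INR (n-1) * sqrt (INR D)).
Proof. intros He HP HD.
  set (K := eps * (1 + eps * Q ^ n)).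
  assert (HK : 0 <= K).
  { unfold K. assert (0 <= Q ^ n) by (apply pow_le; unfold Q; generalize Ns_nonneg; lra). nra. }
  assert (HZ : 0 <= Zc) by apply sqrt_pos.
  assert (HDs : 0 <= sqrt (INR D)) by apply sqrt_pos.
  assert (Hdist : contr_dist n d DC (perturb C be) DC C <= K * Zc * (1 + INR (n-1) * sqrt (INR D))).
  { unfold contr_dist.
    rewrite (msum_ext _ _ _ (fun p => (fsum n (fun j => contract n DC (hyb (S j)) p - contract n DC (hyb j) p))^2)).
    2:{ intros p. rewrite (fsum_telescope n (fun j => contract n DC (hyb j) p)). unfold contract.
        assert (E1 : contr_vec DC (hyb n) p n = contr_vec DC (perturb C be) p n).
        { apply cv_sites. intros. unfold hyb. rewrite (proj2 (Nat.ltb_lt i n)) by lia. auto. }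
        assert (E2 : contr_vec DC (hyb O) p n = contr_vec DC C p n).
        { apply cv_sites. intros. unfold hyb. auto. }
        rewrite E1, E2. auto. }
    eapply Rle_trans. apply msum_mink_sum.
    rewrite fsum_last by auto.
    eapply Rle_trans. apply Rplus_le_compat.
    - apply fsum_le. intros j Hj. apply (term_final D eps j He HP HD). lia.
    - apply (term_final D eps (n-1) He HP HD). lia.
    - rewrite (fsum_ext _ _ (fun _ => K * Zc * sqrt (INR D))).
      2:{ intros j Hj. rewrite (proj2 (Nat.ltb_lt (S j) n)) by lia. auto. }
      rewrite fsum_const. replace (S (n-1)) with n by lia. rewrite Nat.ltb_irrefl.
      fold K. apply Req_le. ring. }
  unfold rel_err. unfold contr_norm. fold Zc.
  destruct (Req_dec Zc 0) as [Z0|Z0].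
  - rewrite Z0 in *. unfold Rdiv. rewrite Rinv_0. rewrite Rmult_0_r.
    assert (0 <= INR (n-1) * sqrt (INR D)) by (apply Rmult_le_pos; auto; apply pos_INR). apply Rmult_le_pos; lra.
  - unfold Rdiv. apply (Rmult_le_reg_r Zc). lra. rewrite Rmult_assoc, Rinv_l by auto. fold K. nra. Qed.
End GUB.


Lemma cv_scale Db (A : mps) s p k b : contr_vec Db (fun j a x b => s * A j a x b) p k b = s^k * contr_vec Db A p k b.
Proof. revert b; induction k; intros b; simpl. ring.
  rewrite <- fsum_scal. apply fsum_ext. intros. rewrite IHk. ring. Qed.

Lemma bernoulli n e : 0 <= e -> 1 + INR n * e <= (1+e)^n.
Proof. intros He. induction n. simpl. lra. rewrite S_INR. simpl pow.
  assert (0 <= INR n) by apply pos_INR. nra. Qed.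

Lemma pos_norm n d Db T : nonzero_contraction n d Db T -> 0 < msum n d (fun p => contract n Db T p ^ 2).
Proof. intros [p [Hp Hc]].
  set (p' := fun j => if Nat.ltb j n then p j else O).
  assert (E : contract n Db T p' = contract n Db T p).
  { unfold contract. rewrite (cv_agree Db T p' p); auto. intros. unfold p'. rewrite (proj2 (Nat.ltb_lt i n)); auto. }
  eapply Rlt_le_trans; [| apply (msum_ge n d _ p')].
  - cbv beta. rewrite E. replace (contract n Db T p ^ 2) with (Rsqr (contract n Db T p)) by (unfold Rsqr; ring). apply Rsqr_pos_lt. auto.
  - intros; apply pow2_ge_0.
  - split; intros j Hj; unfold p'.
    + rewrite (proj2 (Nat.ltb_lt j n)); auto.
    + rewrite (proj2 (Nat.ltb_ge j n)); auto. Qed.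

Lemma T_pert n d Db (T : mps) eps : 0 <= eps -> is_perturbation n d Db T eps (fun j a x b => eps * T j a x b).
Proof. intros He j Hj. unfold site_norm_at. rewrite !site_norm_sn. rewrite sn_scal.
  rewrite sqrt_mult by (try apply pow2_ge_0; apply sn_nonneg). rewrite sqrt_pow2 by auto. lra. Qed.

Lemma T_relerr n d Db (T : mps) eps : nonzero_contraction n d Db T -> 0 <= eps ->
  rel_err n d Db T (fun j a x b => eps * T j a x b) = (1+eps)^n - 1.
Proof. intros Hnz He. unfold rel_err, contr_dist, contr_norm.
  assert (HZ := pos_norm n d Db T Hnz).
  assert (Hp : perturb T (fun j a x b => eps * T j a x b) = fun j a x b => (1+eps) * T j a x b).
  { extensionality j. extensionality a. extensionality x. extensionality b. unfold perturb. ring. }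
  rewrite Hp.
  rewrite (msum_ext _ _ _ (fun p => ((1+eps)^n - 1)^2 * contract n Db T p ^ 2)).
  - rewrite msum_scal. rewrite sqrt_mult by (try apply pow2_ge_0; lra).
    assert (1 <= (1+eps)^n) by (apply pow_R1_Rle; lra).
    rewrite sqrt_pow2 by lra. field. apply Rgt_not_eq. apply sqrt_lt_R0. auto.
  - intros p. unfold contract. rewrite cv_scale. ring. Qed.

Theorem part1 : forall (n : nat) (d DT : nat -> nat) (T : mps) (DC : nat -> nat) (C : mps) (D : nat),
     (1 <= n)%nat ->
     bonds_ok n DT -> bonds_ok n DC ->
     nonzero_contraction n d DT T ->
     same_contraction n d DC C DT T ->
     left_canonical n d DC C ->
     (forall j, (1 <= j)%nat -> (j <= n - 1)%nat -> (DC j <= D)%nat) ->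
     sup_bound_up_to_O_eps2 n d DC C DT T (factor n D).
Proof. intros n d DT T DC C D Hn HbT HbC Hnz _ HL HD.
  set (F1 := 1 + INR (n-1) * sqrt (INR D)).
  assert (HF1 : 0 <= F1).
  { unfold F1. assert (0 <= INR (n-1) * sqrt (INR D)) by (apply Rmult_le_pos; [apply pos_INR|apply sqrt_pos]). lra. }
  set (Qn := Q n d DC C ^ n).
  assert (HQ : 0 <= Qn) by (apply pow_le; unfold Q; generalize (Ns_nonneg n d DC C); lra).
  exists (F1 * Qn), 1. split; [lra|]. intros eps He sC sT [HC1 HC2] [HT1 HT2].
  assert (HsC : sC <= eps * (1 + eps * Qn) * F1).
  { apply HC2. intros r [be [Hbe Hr]]. subst r. apply (GUB n d DC C be Hn HbC HL D eps); auto. lra. }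
  assert (HsT : (1+eps)^n - 1 <= sT).
  { apply HT1. exists (fun j a x b => eps * T j a x b). split. apply T_pert; lra.
    symmetry. apply T_relerr; auto; lra. }
  assert (Hb := bernoulli n eps ltac:(lra)).
  assert (HnR : 0 < INR n) by (apply lt_0_INR; lia).
  assert (Hf : factor n D * (INR n * eps) = F1 * eps) by (unfold factor, F1; field; lra).
  assert (Hf0 : 0 <= factor n D) by (unfold factor; fold F1; unfold Rdiv; apply Rmult_le_pos; [lra| left; apply Rinv_0_lt_compat; lra]).
  assert (factor n D * (INR n * eps) <= factor n D * sT) by (apply Rmult_le_compat_l; lra).
  nra. Qed.


Section Example.
Variables (n D : nat).
Hypothesis Hn : (1 <= n)%nat.
Hypothesis HD : (1 <= D)%nat.

Definition d2 (j : nat) : nat := if Nat.eqb j 0 then D else 1%nat.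
Definition DT2 (j : nat) : nat := 1%nat.
Definition T2 : mps := fun j a x b => if Nat.eqb x 0 then 1 else 0.
Definition DC2 (j : nat) : nat := if orb (Nat.eqb j 0) (Nat.leb n j) then 1%nat else D.
Definition C2 : mps := fun j a x b =>
  if Nat.eqb j (n-1) then (if andb (Nat.eqb a 0) (Nat.eqb x 0) then 1 else 0)
  else if Nat.eqb j 0 then (if Nat.eqb x b then 1 else 0)
  else (if Nat.eqb a b then 1 else 0).
Definition ind3 : site := fun a x b => if andb (andb (Nat.eqb a 0) (Nat.eqb x 0)) (Nat.eqb b 0) then 1 else 0.
Definition be2 (eps : R) : mps := fun j a x b =>
  if Nat.eqb j (n-1) then eps * C2 j a x b else (eps * sqrt (INR D)) * ind3 a x b.

Lemma DC2_0 : DC2 0 = 1%nat. Proof. reflexivity. Qed.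
Lemma DC2_mid k : (k <> 0)%nat -> (k < n)%nat -> DC2 k = D.
Proof. intros. unfold DC2. rewrite (proj2 (Nat.eqb_neq k 0)) by auto. rewrite (proj2 (Nat.leb_gt n k)) by auto. auto. Qed.
Lemma DC2_ge1 k : (1 <= DC2 k)%nat.
Proof. unfold DC2. destruct (orb _ _); lia. Qed.
Lemma d2_ge1 k : (1 <= d2 k)%nat.
Proof. unfold d2. destruct (Nat.eqb k 0); lia. Qed.

Lemma bonds_T2 : bonds_ok n DT2. Proof. split; reflexivity. Qed.
Lemma bonds_C2 : bonds_ok n DC2.
Proof. split. reflexivity. unfold DC2. rewrite Nat.leb_refl. destruct (Nat.eqb n 0); auto. Qed.

Lemma DC2_inner j : (1 <= j)%nat -> (j <= n-1)%nat -> DC2 j = D.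
Proof. intros. apply DC2_mid; lia. Qed.

Lemma fsum1 f : fsum 1 f = f O. Proof. simpl. ring. Qed.

Lemma lc_T2 : left_canonical n d2 DT2 T2.
Proof. intros j Hj b b' Hb Hb'. unfold DT2 in *. assert (b = O) by lia. assert (b' = O) by lia. subst.
  simpl Nat.eqb. rewrite fsum1. unfold T2.
  rewrite (fsum_ext _ _ (fun x => (if Nat.eqb x 0 then 1 else 0) * 1)).
  apply fsum_delta'. generalize (d2_ge1 j); lia.
  intros x _. destruct (Nat.eqb x 0); ring. Qed.

Lemma lc_C2 : left_canonical n d2 DC2 C2.
Proof. intros j Hj b b' Hb Hb'. unfold C2.
  rewrite (proj2 (Nat.eqb_neq j (n-1))) by lia.
  destruct (Nat.eqb_spec j 0) as [E|E].
  - subst. rewrite DC2_0, fsum1. rewrite DC2_mid in Hb, Hb' by lia. unfold d2. simpl Nat.eqb. cbv iota.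
    rewrite fsum_delta' by auto. destruct (Nat.eqb_spec b b'), (Nat.eqb_spec b' b); auto; lia.
  - rewrite DC2_mid by lia. rewrite DC2_mid in Hb, Hb' by lia.
    unfold d2. rewrite (proj2 (Nat.eqb_neq j 0)) by auto.
    rewrite (fsum_ext _ _ (fun a => (if Nat.eqb a b then 1 else 0) * (if Nat.eqb a b' then 1 else 0))).
    + rewrite fsum_delta' by auto. destruct (Nat.eqb_spec b b'), (Nat.eqb_spec b' b); auto; lia.
    + intros. rewrite fsum1. auto. Qed.

Definition okp (p : nat -> nat) : Prop := forall j, (j < n)%nat -> (p j < d2 j)%nat.

Lemma okp_p0 p : okp p -> (p O < D)%nat.
Proof. intros H. specialize (H O Hn). unfold d2 in H. simpl in H. auto. Qed.
Lemma okp_pj p j : okp p -> (j <> 0)%nat -> (j < n)%nat -> p j = O.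
Proof. intros H Hj Hjn. specialize (H j Hjn). unfold d2 in H. rewrite (proj2 (Nat.eqb_neq j 0)) in H by auto. lia. Qed.

Lemma T2_cv p k b : okp p -> (1 <= k <= n)%nat -> contr_vec DT2 T2 p k b = if Nat.eqb (p O) 0 then 1 else 0.
Proof. intros Hp. revert b. induction k; intros b Hk; [lia|].
  simpl contr_vec. unfold DT2.  unfold T2.
  destruct k.
  - simpl. destruct (Nat.eqb (p O) 0); ring.
  - rewrite IHk by lia. rewrite (okp_pj p (S k)) by (auto; lia). simpl. ring. Qed.

Lemma T2_contract p : okp p -> contract n DT2 T2 p = if Nat.eqb (p O) 0 then 1 else 0.
Proof. intros. unfold contract. apply T2_cv; auto; lia. Qed.

Lemma nz_T2 : nonzero_contraction n d2 DT2 T2.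
Proof. exists zp. split. intros. unfold zp. generalize (d2_ge1 j); lia.
  rewrite T2_contract. simpl. lra. intros j _. unfold zp. generalize (d2_ge1 j); lia. Qed.


Definition P2 (eps : R) : mps := perturb C2 (be2 eps).

Lemma P2_cv eps p k b : okp p -> (1 <= k)%nat -> (k <= n-1)%nat ->
  contr_vec DC2 (P2 eps) p k b =
  if Nat.eqb (p O) b then (if Nat.eqb (p O) 0 then (1 + eps * sqrt (INR D))^k else 1) else 0.
Proof. intros Hp. revert b. induction k; intros b Hk1 Hk2; [lia|].
  assert (HD0 := okp_p0 p Hp).
  simpl contr_vec. destruct k.
  - rewrite DC2_0. simpl fsum. unfold P2, perturb, be2, C2, ind3.
    rewrite (proj2 (Nat.eqb_neq 0 (n-1))) by lia. simpl Nat.eqb. cbv iota.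
    destruct (Nat.eqb_spec (p O) b), (Nat.eqb_spec (p O) 0), (Nat.eqb_spec b 0); simpl; try ring; lia.
  - rewrite DC2_mid by lia. rewrite (okp_pj p (S k)) by (auto; lia).
    set (g := if Nat.eqb (p O) 0 then (1 + eps * sqrt (INR D)) ^ S k else 1).
    rewrite (fsum_ext _ _ (fun a => (if Nat.eqb (p O) a then 1 else 0) *
        (g * ((if Nat.eqb a b then 1 else 0) + eps * sqrt (INR D) * (if andb (andb (Nat.eqb a 0) true) (Nat.eqb b 0) then 1 else 0))))).
    + rewrite fsum_delta by auto. unfold g.
      destruct (Nat.eqb_spec (p O) b), (Nat.eqb_spec (p O) 0), (Nat.eqb_spec b 0); simpl; try ring; lia.
    + intros a Ha. rewrite IHk by lia. fold g. unfold P2, perturb, be2, C2, ind3.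
      rewrite (proj2 (Nat.eqb_neq (S k) (n-1))) by lia. rewrite (proj2 (Nat.eqb_neq (S k) 0)) by lia.
      simpl (Nat.eqb 0 0). destruct (Nat.eqb (p O) a); ring. Qed.

Lemma P2_contract eps p : okp p ->
  contract n DC2 (P2 eps) p = (1 + eps) * (1 + eps * sqrt (INR D))^(n-1) * (if Nat.eqb (p O) 0 then 1 else 0).
Proof. intros Hp. assert (HD0 := okp_p0 p Hp). unfold contract.
  replace (contr_vec DC2 (P2 eps) p n) with (contr_vec DC2 (P2 eps) p (S (n-1))) by (f_equal; lia). simpl contr_vec.
  destruct (Nat.eq_dec n 1) as [E|E].
  - replace (n-1)%nat with O by lia. rewrite DC2_0. simpl fsum. unfold P2, perturb, be2, C2.
    unfold C2. rewrite E. simpl. destruct (Nat.eqb (p O) 0); ring.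
  - rewrite DC2_mid by lia. rewrite (okp_pj p (n-1)) by (auto; lia).
    set (g := if Nat.eqb (p O) 0 then (1 + eps * sqrt (INR D)) ^ (n-1) else 1).
    rewrite (fsum_ext _ _ (fun a => (if Nat.eqb (p O) a then 1 else 0) *
        (g * ((1+eps) * (if Nat.eqb a 0 then 1 else 0))))).
    + rewrite fsum_delta by auto. unfold g. destruct (Nat.eqb_spec (p O) 0); ring.
    + intros a Ha. rewrite P2_cv by (auto; lia). fold g. unfold P2, perturb, be2, C2.
      rewrite Nat.eqb_refl. simpl (Nat.eqb 0 0). destruct (Nat.eqb (p O) a), (Nat.eqb a 0); simpl; ring. Qed.


Lemma C2_eq : P2 0 = C2.
Proof. extensionality j. extensionality a. extensionality x. extensionality b.
  unfold P2, perturb, be2. destruct (Nat.eqb j (n-1)); ring. Qed.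

Lemma C2_contract p : okp p -> contract n DC2 C2 p = if Nat.eqb (p O) 0 then 1 else 0.
Proof. intros Hp. rewrite <- C2_eq. rewrite P2_contract by auto.
  rewrite Rmult_0_l, Rplus_0_r, pow1. ring. Qed.

Lemma same_C2 : same_contraction n d2 DC2 C2 DT2 T2.
Proof. intros p Hp. rewrite C2_contract, T2_contract; auto. Qed.

Lemma nz_C2 : nonzero_contraction n d2 DC2 C2.
Proof. exists zp. split. intros. unfold zp. generalize (d2_ge1 j); lia.
  rewrite C2_contract. simpl. lra. intros j _. unfold zp. generalize (d2_ge1 j); lia. Qed.

Lemma sn_ind3 N1 N2 N3 : (1 <= N1)%nat -> (1 <= N2)%nat -> (1 <= N3)%nat -> sn N1 N2 N3 ind3 = 1.
Proof. intros. unfold sn.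
  rewrite (fsum_ext _ _ (fun a => (if Nat.eqb a 0 then 1 else 0) *
     fsum N2 (fun x => (if Nat.eqb x 0 then 1 else 0) * fsum N3 (fun b => (if Nat.eqb b 0 then 1 else 0) * 1)))).
  - rewrite fsum_delta' by lia. rewrite fsum_delta' by lia. rewrite fsum_delta' by lia. auto.
  - intros a _. rewrite <- fsum_scal. apply fsum_ext. intros x _. rewrite <- fsum_scal.
    rewrite <- fsum_scal. apply fsum_ext. intros b _. unfold ind3.
    destruct (Nat.eqb a 0), (Nat.eqb x 0), (Nat.eqb b 0); simpl; ring. Qed.

Lemma pert_be2 eps : 0 <= eps -> is_perturbation n d2 DC2 C2 eps (be2 eps).
Proof. intros He j Hj. unfold site_norm_at. rewrite !site_norm_sn.
  destruct (Nat.eq_dec j (n-1)) as [E|E].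
  - replace (be2 eps j) with (fun a x b => eps * C2 j a x b).
    + rewrite sn_scal. rewrite sqrt_mult by (try apply pow2_ge_0; apply sn_nonneg). rewrite sqrt_pow2 by auto. lra.
    + extensionality a. extensionality x. extensionality b. unfold be2. rewrite E, Nat.eqb_refl. auto.
  - replace (be2 eps j) with (fun a x b => (eps * sqrt (INR D)) * ind3 a x b).
    + rewrite sn_scal. rewrite sn_ind3 by (apply DC2_ge1 || apply d2_ge1).
      rewrite (sn_mid n d2 DC2 C2 lc_C2 j) by lia. rewrite DC2_mid by lia.
      rewrite Rmult_1_r. rewrite sqrt_pow2. lra. apply Rmult_le_pos; auto; apply sqrt_pos.
    + extensionality a. extensionality x. extensionality b. unfold be2. rewrite (proj2 (Nat.eqb_neq j (n-1))) by auto. auto. Qed.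

Lemma relerr_C2 eps : 0 <= eps ->
  rel_err n d2 DC2 C2 (be2 eps) = (1 + eps) * (1 + eps * sqrt (INR D))^(n-1) - 1.
Proof. intros He. set (lam := (1 + eps) * (1 + eps * sqrt (INR D))^(n-1)).
  assert (Hl : 1 <= lam).
  { unfold lam. assert (1 <= (1 + eps * sqrt (INR D))^(n-1)).
    { apply pow_R1_Rle. assert (0 <= eps * sqrt (INR D)) by (apply Rmult_le_pos; auto; apply sqrt_pos). lra. }
    nra. }
  unfold rel_err, contr_dist, contr_norm.
  rewrite (msum_ext_valid _ _ _ (fun p => (lam - 1)^2 * contract n DC2 C2 p ^ 2)).
  - rewrite msum_scal. rewrite sqrt_mult by (try apply pow2_ge_0; apply msum_nonneg; intros; apply pow2_ge_0).
    rewrite sqrt_pow2 by lra. field. apply Rgt_not_eq. apply sqrt_lt_R0. apply pos_norm. apply nz_C2.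
  - intros p [Hp _]. fold (P2 eps). rewrite P2_contract, C2_contract by auto. fold lam. ring. Qed.

End Example.


Theorem part2 : forall (n D : nat), (1 <= n)%nat -> (1 <= D)%nat ->
     forall c : R, c < factor n D ->
       exists (d DT : nat -> nat) (T : mps) (DC : nat -> nat) (C : mps),
         bonds_ok n DT /\ bonds_ok n DC /\
         nonzero_contraction n d DT T /\
         same_contraction n d DC C DT T /\
         left_canonical n d DC C /\
         (forall j, (1 <= j)%nat -> (j <= n - 1)%nat -> DC j = D) /\
         ~ sup_bound_up_to_O_eps2 n d DC C DT T c.
Proof. intros n D Hn HD c Hc.
  exists (d2 D), DT2, T2, (DC2 n D), (C2 n).
  split; [apply bonds_T2|]. split; [apply bonds_C2|]. split; [apply nz_T2; auto|].
  split; [apply same_C2; auto|]. split; [apply lc_C2; auto|]. split; [apply DC2_inner; auto|].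
  intros [K [e0 [He0 Hs]]].
  set (F1 := 1 + INR (n-1) * sqrt (INR D)).
  assert (HnR : 0 < INR n) by (apply lt_0_INR; lia).
  assert (HF1 : 1 <= F1).
  { unfold F1. assert (0 <= INR (n-1) * sqrt (INR D)) by (apply Rmult_le_pos; [apply pos_INR|apply sqrt_pos]). lra. }
  set (f := factor n D).
  assert (Hf : f * INR n = F1) by (unfold f, factor; fold F1; field; lra).
  assert (Hf0 : 0 < f). { assert (0 < f * INR n) by lra. nra. }
  set (cp := Rmax c 0).
  assert (Hcp0 : 0 <= cp) by apply Rmax_r.
  assert (Hcp1 : c <= cp) by apply Rmax_l.
  assert (Hcpf : cp < f) by (unfold cp; apply Rmax_lub_lt; unfold f in *; lra).
  set (QT := Q n (d2 D) DT2 T2 ^ n).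
  assert (HQ : 0 <= QT) by (apply pow_le; unfold Q; generalize (Ns_nonneg n (d2 D) DT2 T2); lra).
  set (A := cp * INR n * QT + Rabs K + 1).
  assert (HA : 1 <= A) by (unfold A; assert (0 <= cp * INR n * QT) by (apply Rmult_le_pos; nra); generalize (Rabs_pos K); lra).
  set (eps := Rmin (Rmin (e0/2) (1/2)) (INR n * (f - cp) / (2*A))).
  assert (Hpos : 0 < INR n * (f - cp) / (2*A)).
  { unfold Rdiv. apply Rmult_lt_0_compat. nra. apply Rinv_0_lt_compat. lra. }
  assert (He1 : eps <= e0/2) by (unfold eps; eapply Rle_trans; [apply Rmin_l| apply Rmin_l]).
  assert (He2 : eps <= 1/2) by (unfold eps; eapply Rle_trans; [apply Rmin_l| apply Rmin_r]).
  assert (He3 : eps <= INR n * (f - cp) / (2*A)) by (unfold eps; apply Rmin_r).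
  assert (He4 : 0 < eps).
  { unfold eps. apply Rmin_glb_lt; [apply Rmin_glb_lt|]; lra. }
  assert (HeA : eps * A <= INR n * (f - cp) / 2).
  { replace (INR n * (f - cp) / 2) with ((INR n * (f - cp) / (2*A)) * A) by (field; lra). nra. }
  assert (HubT : forall r, err_set n (d2 D) DT2 T2 eps r -> r <= eps * (1 + eps * QT) * INR n).
  { intros r [be [Hbe Hr]]. subst r. eapply Rle_trans.
    apply (GUB n (d2 D) DT2 T2 be Hn (bonds_T2 n) (lc_T2 n D Hn HD) 1 eps); [lra | auto | intros; unfold DT2; lia].
    replace (sqrt (INR 1)) with 1 by (simpl; rewrite sqrt_1; auto). rewrite Rmult_1_r. replace (1 + INR (n-1)) with (INR n). fold QT. lra.
    rewrite minus_INR by lia. simpl. ring. }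
  assert (HubC : forall r, err_set n (d2 D) (DC2 n D) (C2 n) eps r ->
      r <= eps * (1 + eps * Q n (d2 D) (DC2 n D) (C2 n) ^ n) * F1).
  { intros r [be [Hbe Hr]]. subst r.
    apply (GUB n (d2 D) (DC2 n D) (C2 n) be Hn (bonds_C2 n D) (lc_C2 n D Hn HD) D eps); [lra | auto | intros; rewrite DC2_inner; auto]. }
  assert (HinT : err_set n (d2 D) DT2 T2 eps ((1+eps)^n - 1)).
  { exists (fun j a x b => eps * T2 j a x b). split. apply T_pert; lra.
    symmetry. apply T_relerr. apply nz_T2; auto. lra. }
  assert (HinC : err_set n (d2 D) (DC2 n D) (C2 n) eps ((1 + eps) * (1 + eps * sqrt (INR D))^(n-1) - 1)).
  { exists (be2 n D eps). split. apply pert_be2; auto; lra. symmetry. apply relerr_C2; auto; lra. }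
  destruct (completeness (err_set n (d2 D) DT2 T2 eps)) as [sT HsT].
  { exists (eps * (1 + eps * QT) * INR n). intros r Hr. apply HubT; auto. }
  { eexists; eauto. }
  destruct (completeness (err_set n (d2 D) (DC2 n D) (C2 n) eps)) as [sC HsC].
  { eexists. intros r Hr. apply HubC; eauto. }
  { eexists; eauto. }
  specialize (Hs eps ltac:(lra) sC sT HsC HsT).
  assert (HsT1 : sT <= eps * (1 + eps * QT) * INR n) by (apply HsT; intros r Hr; apply HubT; auto).
  assert (HsT0 : 0 <= sT).
  { apply Rle_trans with ((1+eps)^n - 1). assert (1 <= (1+eps)^n) by (apply pow_R1_Rle; lra). lra.
    apply HsT; auto. }
  assert (HsC0 : (1 + eps) * (1 + eps * sqrt (INR D))^(n-1) - 1 <= sC) by (apply HsC; auto).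
  assert (Hbern := bernoulli (n-1) (eps * sqrt (INR D)) ltac:(apply Rmult_le_pos; [lra| apply sqrt_pos])).
  assert (HlowC : eps * F1 <= sC).
  { unfold F1. assert (0 <= INR (n-1) * (eps * sqrt (INR D))) by (apply Rmult_le_pos; [apply pos_INR| apply Rmult_le_pos; [lra|apply sqrt_pos]]).
    nra. }
  assert (Hc1 : c * sT <= cp * sT) by (apply Rmult_le_compat_r; auto).
  assert (Hc2 : cp * sT <= cp * (eps * (1 + eps * QT) * INR n)) by (apply Rmult_le_compat_l; auto).
  assert (HK : K * eps ^ 2 <= Rabs K * eps ^ 2) by (apply Rmult_le_compat_r; [apply pow2_ge_0| apply Rle_abs]).
  assert (Hmain : eps * (f * INR n) <= eps * (cp * INR n) + eps * (eps * (A - 1))).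
  { rewrite Hf. unfold A. nra. }
  assert (Hd : f * INR n <= cp * INR n + eps * (A - 1)).
  { apply Rmult_le_reg_l with eps; auto. lra. }
  nra. Qed.

Theorem mainTheorem13 :
  (forall (n : nat) (d DT : nat -> nat) (T : mps) (DC : nat -> nat) (C : mps)
          (D : nat),
     (1 <= n)%nat ->
     bonds_ok n DT -> bonds_ok n DC ->
     nonzero_contraction n d DT T ->
     same_contraction n d DC C DT T ->
     left_canonical n d DC C ->
     (forall j, (1 <= j)%nat -> (j <= n - 1)%nat -> (DC j <= D)%nat) ->
     sup_bound_up_to_O_eps2 n d DC C DT T (factor n D))
  /\
  (forall (n D : nat), (1 <= n)%nat -> (1 <= D)%nat ->
     forall c : R, c < factor n D ->
       exists (d DT : nat -> nat) (T : mps) (DC : nat -> nat) (C : mps),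
         bonds_ok n DT /\ bonds_ok n DC /\
         nonzero_contraction n d DT T /\
         same_contraction n d DC C DT T /\
         left_canonical n d DC C /\
         (forall j, (1 <= j)%nat -> (j <= n - 1)%nat -> DC j = D) /\
         ~ sup_bound_up_to_O_eps2 n d DC C DT T c).
Proof. split. exact part1. exact part2. Qed.
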